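(* Let $M$ be a finite abelian group of exponent greater than $2$. Then $\mathrm{Half}(L_M)\cong C_2\times\mathrm{Aut}(L_M)$.
   Context: Let $K=\{1,a,b,c\}$ be the Klein four-group. Set $L_M=K\times M$ with the operation $(A,x)*(B,y)=(AB,xy)$ if $B=1$, and $(A,x)*(B,y)=(AB,x^{-1}y)$ if $B\neq 1$. $\mathrm{Half}(L_M)$ denotes the group (under composition) of half-automorphisms of $L_M$, i.e. bijections $f$ with $f(XY)\in\{f(X)f(Y),f(Y)f(X)\}$ for all $X,Y$; $\mathrm{Aut}(L_M)$ is the automorphism group; $C_2$ is the cyclic group of order $2$. *)

(* Defs.v *)
From HB Require Import structures.
From mathcomp Require Import all_boot all_fingroup all_solvable all_algebra.
Set Implicit Arguments. Unset Strict Implicit. Unset Printing Implicit Defensive.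
Local Open Scope group_scope.

Definition Klein := (bool * bool)%type.
Definition K1 : Klein := (false, false).
Definition Kmul (A B : Klein) : Klein := (A.1 (+) B.1, A.2 (+) B.2).

Definition LM (M : finGroupType) := (Klein * M)%type.

Definition Lmul (M : finGroupType) (X Y : LM M) : LM M :=
  (Kmul X.1 Y.1, if Y.1 == K1 then X.2 * Y.2 else (X.2)^-1 * Y.2).

Definition Half (M : finGroupType) : {set {perm LM M}} :=
  [set f : {perm LM M} | [forall X : LM M, forall Y : LM M,
     (f (Lmul X Y) == Lmul (f X) (f Y)) || (f (Lmul X Y) == Lmul (f Y) (f X))]].

Definition Aut_L (M : finGroupType) : {set {perm LM M}} :=
  [set f : {perm LM M} | [forall X : LM M, forall Y : LM M,
     f (Lmul X Y) == Lmul (f X) (f Y)]].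

(* Main.v *)
Require Import Defs.
From mathcomp Require Import all_boot all_fingroup all_solvable all_algebra.
Set Implicit Arguments. Unset Strict Implicit. Unset Printing Implicit Defensive.
Local Open Scope group_scope.

Lemma Kmul1 A : Kmul A K1 = A. Proof. by case: A => [] [] []. Qed.
Lemma K1mul A : Kmul K1 A = A. Proof. by case: A => [] [] []. Qed.
Lemma Kmulxx A : Kmul A A = K1. Proof. by case: A => [] [] []. Qed.
Lemma KmulC A B : Kmul A B = Kmul B A. Proof. by case: A B => [] [] [] [] [] []. Qed.
Lemma Kmul_eq1 A B : (Kmul A B == K1) = (A == B).
Proof. by case: A B => [] [] [] [] [] []. Qed.

Lemma Lmul_r1 (M : finGroupType) A (x y : M) : Lmul (A, x) (K1, y) = (A, x * y).
Proof. by rewrite /Lmul /= Kmul1. Qed.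
Lemma Lmul_l1 (M : finGroupType) B (x y : M) :
  Lmul (K1, x) (B, y) = (B, if B == K1 then x * y else x^-1 * y).
Proof. by rewrite /Lmul /= K1mul. Qed.
Lemma Lmul_n (M : finGroupType) A B (x y : M) : B != K1 ->
  Lmul (A, x) (B, y) = (Kmul A B, x^-1 * y).
Proof. by move=> /negbTE nB; rewrite /Lmul /= nB. Qed.

Definition isHalf (M : finGroupType) (f : LM M -> LM M) :=
  forall X Y, f (Lmul X Y) = Lmul (f X) (f Y) \/ f (Lmul X Y) = Lmul (f Y) (f X).
Definition isAut (M : finGroupType) (f : LM M -> LM M) :=
  forall X Y, f (Lmul X Y) = Lmul (f X) (f Y).

Lemma exists_sq (M : finGroupType) : 2 < exponent [set: M] -> exists y : M, y ^+ 2 != 1.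
Proof.
move=> e2; case: (pickP (fun y : M => y ^+ 2 != 1)) => [y Hy | H]; first by exists y.
have : exponent [set: M] %| 2 by apply/exponentP => x _; apply/eqP/negbFE/H.
by move/dvdn_leq => /(_ isT); rewrite leqNgt e2.
Qed.

Lemma sq_ne1_inv (M : finGroupType) (y : M) : y ^+ 2 != 1 -> y^-1 ^+ 2 != 1.
Proof. by rewrite expgVn; apply: contra => /eqP H; rewrite -[y ^+ 2]invgK H invg1. Qed.

Lemma half1 (M : finGroupType) (f : LM M -> LM M) : isHalf f -> f (K1, 1) = (K1, 1).
Proof.
move=> fH.
have H : f (K1, 1) = Lmul (f (K1, 1)) (f (K1, 1)).
  by have := fH (K1, 1) (K1, 1); rewrite Lmul_r1 mulg1; case.
move: H; case: (f (K1,1)) => P u; rewrite /Lmul /= Kmulxx; case=> -> /=.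
move=> H; congr (_, _); by apply: (mulgI u); rewrite mulg1 -H.
Qed.

Lemma fN_sq (M : finGroupType) (f : LM M -> LM M) x : isHalf f -> injective f ->
  x ^+ 2 != 1 -> (f (K1, x)).1 = K1.
Proof.
move=> fH finj x2.
have H : f (K1, x * x) = Lmul (f (K1, x)) (f (K1, x)).
  by have := fH (K1, x) (K1, x); rewrite Lmul_r1; case.
apply/eqP; apply/negPn/negP => nP.
move: H; case E: (f (K1, x)) nP => [P u] /= nP.
rewrite Lmul_n // Kmulxx mulVg -(half1 fH) => /finj [] /eqP.
have -> : x * x = x ^+ 2 by rewrite expgS expg1.
by rewrite (negbTE x2).
Qed.

Lemma fN (M : finGroupType) (mulC : forall x y : M, x * y = y * x) (y0 : M)
  (Hy0 : y0 ^+ 2 != 1) (f : LM M -> LM M) x : isHalf f -> injective f ->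
  (f (K1, x)).1 = K1.
Proof.
move=> fH finj; have [x2|x2] := eqVneq (x ^+ 2) 1; last exact: fN_sq.
have e : Lmul (K1, x * y0) (K1, y0^-1) = (K1, x) by rewrite Lmul_r1 mulgK.
have h1 : (f (K1, x * y0)).1 = K1.
  apply: fN_sq => //; rewrite expgMn; last exact: mulC.
  by rewrite x2 mul1g.
have h2 : (f (K1, y0^-1)).1 = K1 by apply: fN_sq => //; apply: sq_ne1_inv.
have := fH (K1, x * y0) (K1, y0^-1); rewrite e.
by case=> ->; rewrite /Lmul /= ?h1 ?h2.
Qed.

Definition phi (M : finGroupType) (f : LM M -> LM M) (x : M) := (f (K1, x)).2.

Lemma fNE (M : finGroupType) (mulC : forall x y : M, x * y = y * x) (y0 : M)
  (Hy0 : y0 ^+ 2 != 1) (f : LM M -> LM M) x : isHalf f -> injective f ->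
  f (K1, x) = (K1, phi f x).
Proof.
move=> fH finj; rewrite /phi; move: (fN mulC Hy0 x fH finj).
by case: (f (K1, x)) => P u /= ->.
Qed.

Lemma phiM (M : finGroupType) (mulC : forall x y : M, x * y = y * x) (y0 : M)
  (Hy0 : y0 ^+ 2 != 1) (f : LM M -> LM M) x y : isHalf f -> injective f ->
  phi f (x * y) = phi f x * phi f y.
Proof.
move=> fH finj; have := fH (K1, x) (K1, y).
rewrite Lmul_r1 !(fNE mulC Hy0 _ fH finj) !Lmul_r1.
by case=> -[->] //; rewrite mulC.
Qed.

Lemma phi_inj (M : finGroupType) (mulC : forall x y : M, x * y = y * x) (y0 : M)
  (Hy0 : y0 ^+ 2 != 1) (f : LM M -> LM M) : isHalf f -> injective f ->
  injective (phi f).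
Proof.
move=> fH finj x y e; have : f (K1, x) = f (K1, y).
  by rewrite !(fNE mulC Hy0 _ fH finj) e.
by move/finj => [].
Qed.

Lemma fnN (M : finGroupType) (mulC : forall x y : M, x * y = y * x) (y0 : M)
  (Hy0 : y0 ^+ 2 != 1) (f : LM M -> LM M) A x : isHalf f -> injective f ->
  A != K1 -> (f (A, x)).1 != K1.
Proof.
move=> fH finj nA; apply/negP => /eqP e.
have [g _ gK] := injF_bij (phi_inj mulC Hy0 fH finj).
have : f (K1, g (f (A, x)).2) = f (A, x).
  by rewrite (fNE mulC Hy0 _ fH finj) gK -e; case: (f (A, x)).
by move/finj => [] E; rewrite E eqxx in nA.
Qed.

Lemma fpi (M : finGroupType) (mulC : forall x y : M, x * y = y * x) (y0 : M)
  (Hy0 : y0 ^+ 2 != 1) (f : LM M -> LM M) A x : isHalf f -> injective f ->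
  (f (A, x)).1 = (f (A, 1)).1.
Proof.
move=> fH finj; have := fH (A, 1) (K1, x).
rewrite Lmul_r1 mul1g (fNE mulC Hy0 _ fH finj).
case: (f (A, 1)) => P u; case=> ->; first by rewrite Lmul_r1.
by rewrite Lmul_l1.
Qed.

Lemma urel (M : finGroupType) (mulC : forall x y : M, x * y = y * x) (y0 : M)
  (Hy0 : y0 ^+ 2 != 1) (f : LM M -> LM M) A x y : isHalf f -> injective f ->
  A != K1 ->
  (f (A, x * y)).2 = (f (A, x)).2 * phi f y \/
  (f (A, x * y)).2 = (f (A, x)).2 * (phi f y)^-1.
Proof.
move=> fH finj nA; have := fH (A, x) (K1, y).
have := fnN mulC Hy0 x fH finj nA.
rewrite Lmul_r1 (fNE mulC Hy0 _ fH finj).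
case: (f (A, x)) => P u /= nP; case=> ->; first by rewrite Lmul_r1; left.
by rewrite Lmul_l1 (negbTE nP) /= mulC; right.
Qed.

Lemma hom1 (M : finGroupType) (ph : M -> M) :
  (forall x y, ph (x * y) = ph x * ph y) -> ph 1 = 1.
Proof.
move=> phM; have := phM 1 1; rewrite mulg1 => H.
by apply: (mulgI (ph 1)); rewrite mulg1 -H.
Qed.

Lemma homV (M : finGroupType) (ph : M -> M) :
  (forall x y, ph (x * y) = ph x * ph y) -> forall x, ph x^-1 = (ph x)^-1.
Proof.
move=> phM x; apply: (mulgI (ph x)); rewrite -phM !mulgV; exact: hom1.
Qed.

Lemma sign_lemma (M : finGroupType) (mulC : forall x y : M, x * y = y * x)
  (ph : M -> M) (phM : forall x y, ph (x * y) = ph x * ph y)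
  (u : M -> M) (uinj : injective u)
  (rel : forall x y, u (x * y) = u x * ph y \/ u (x * y) = u x * (ph y)^-1) :
  (forall x, u x = u 1 * ph x) \/ (forall x, u x = u 1 * (ph x)^-1).
Proof.
set c := u 1.
have base y : u y = c * ph y \/ u y = c * (ph y)^-1 by have := rel 1 y; rewrite mul1g.
case: (boolP [forall x, u x == c * ph x]) => [/forallP H|/forallPn [x Hx]].
  by left => x; apply/eqP.
case: (boolP [forall x, u x == c * (ph x)^-1]) => [/forallP H|/forallPn [y Hy]].
  by right => z; apply/eqP.
exfalso.
have ux : u x = c * (ph x)^-1 by case: (base x) => // e; rewrite e eqxx in Hx.
have uy : u y = c * ph y by case: (base y) => // e; rewrite e eqxx in Hy.
have nX : (ph x)^-1 != ph x by apply: contra Hx => /eqP e; rewrite ux e.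
have nY : (ph y)^-1 != ph y by apply: contra Hy => /eqP e; rewrite uy e.
set X := ph x in ux nX; set Y := ph y in uy nY.
have phxy : ph (x * y) = X * Y by rewrite phM.
have key : (X * Y)^-1 = X * Y.
  have r1 := rel x y; have r2 := rel y x; have r3 := base (x * y).
  rewrite ux -/Y -!mulgA in r1; rewrite [y * x]mulC uy -/X -!mulgA in r2.
  rewrite phxy in r3.
  case: r1 => e1.
    exfalso; case: r3; rewrite e1 => /(mulgI c) e3.
      by move/mulIg: e3 => e3; rewrite e3 eqxx in nX.
    move: e3; rewrite invMg [Y^-1 * _]mulC => /mulgI e3.
    by rewrite -e3 eqxx in nY.
  case: r2; rewrite e1 => /(mulgI c) e2.
    by rewrite invMg [Y^-1 * _]mulC e2 mulC.
  exfalso; move: e2; rewrite [Y * _]mulC => /mulgI e2.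
  by rewrite e2 eqxx in nY.
have r := rel x (x * y)^-1.
have e : x * (x * y)^-1 = y^-1 by rewrite invMg mulC -mulgA mulVg mulg1.
rewrite e ux (homV phM) phxy key in r.
have : u y^-1 = u y.
  by case: r => ->; rewrite ?key uy -mulgA mulKg.
move/uinj => yy; move: nY; rewrite -(homV phM) yy eqxx //.
Qed.

Lemma core_alg (M : finGroupType) (mulC : forall x y : M, x * y = y * x)
  (k c Z : M) : Z * Z != 1 ->
  c = k \/ c = k^-1 ->
  c * Z = k * Z^-1 \/ c = k^-1 ->
  c = k \/ c * Z^-1 = k^-1 * Z ->
  c = k * Z^-1 * Z^-1 \/ c = k^-1 * Z * Z -> False.
Proof.
move=> ZZ h1 h2 h3 h4.
have nZ : Z != Z^-1.
  by apply: contra ZZ => /eqP e; rewrite {2}e mulgV.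
have nZ2 : Z^-1 * Z^-1 != 1.
  by rewrite -invMg; apply: contra ZZ => /eqP e; rewrite -[Z * Z]invgK e invg1.
have kk : c = k -> k = k^-1 -> False.
  move=> ck kk; case: h4; rewrite ck.
    rewrite -mulgA => /esym e; have := @mulgI _ k _ _ (etrans e (esym (mulg1 k))).
    by move=> e'; rewrite e' eqxx in nZ2.
  rewrite -kk -mulgA => /esym e; have := @mulgI _ k _ _ (etrans e (esym (mulg1 k))).
  by move=> e'; rewrite e' eqxx in ZZ.
case: h2 => h2.
  case: h3 => h3.
    move: h2; rewrite h3 => /mulgI e; by case/negP: nZ; apply/eqP.
  case: h1 => h1.
    move: h2; rewrite h1 => /mulgI e; by case/negP: nZ; apply/eqP.
  move: h3; rewrite h1 => /mulgI e; by case/negP: nZ; apply/eqP; rewrite e.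
case: h3 => h3.
  by apply: (kk h3); rewrite -h2 h3.
move: h3; rewrite h2 => /mulgI e; by case/negP: nZ; apply/eqP; rewrite e.
Qed.

Lemma rearr (M : finGroupType) (mulC : forall x y : M, x * y = y * x) (a b X Y : M) :
  (a * X)^-1 * (b * Y) = (a^-1 * b) * (X^-1 * Y).
Proof.
rewrite invMg [X^-1 * a^-1]mulC -!mulgA; congr (a^-1 * _).
by rewrite !mulgA [X^-1 * b]mulC.
Qed.

Lemma cross_alg (M : finGroupType) (mulC : forall x y : M, x * y = y * x)
  (ph : M -> M) (phM : forall x y, ph (x * y) = ph x * ph y)
  (uA uB uC : M -> M) (z : M) (Hz : ph z * ph z != 1)
  (E : forall x y, uC (x^-1 * y) = (uA x)^-1 * uB y \/ uC (x^-1 * y) = (uB y)^-1 * uA x)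
  (hA : forall x, uA x = uA 1 * ph x) (hB : forall x, uB x = uB 1 * (ph x)^-1)
  (hC : (forall x, uC x = uC 1 * ph x) \/ (forall x, uC x = uC 1 * (ph x)^-1)) : False.
Proof.
have ph1 := hom1 phM; have phV := homV phM.
set cA := uA 1 in hA; set cB := uB 1 in hB; set cC := uC 1 in hC.
set k := cA^-1 * cB; set Z := ph z in Hz.
have kV : k^-1 = cB^-1 * cA by rewrite /k invMg invgK.
have e11 := E 1 1; have e1z := E 1 z; have ez1 := E z 1; have ezz := E z z.
rewrite invg1 mulg1 -/cA -/cB -/cC in e11.
rewrite invg1 mul1g -/cA (hB z) -/Z in e1z.
rewrite mulg1 -/cB (hA z) -/Z in ez1.
rewrite mulVg -/cC (hA z) (hB z) -/Z in ezz.
have h1 : cC = k \/ cC = k^-1 by rewrite kV.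
rewrite !(rearr mulC) invgK -kV !mulgA -/k in ezz.
rewrite mulgA -/k in e1z.
rewrite invMg -mulgA -/k [Z^-1 * k]mulC [cB^-1 * _]mulgA -kV in ez1.
rewrite invMg invgK -[Z * cB^-1 * cA]mulgA -kV [Z * k^-1]mulC in e1z.
have hZ1 := hC; have hZ2 := hC.
case: hC => hC; move: (hC z) (hC z^-1); rewrite phV ?invgK -/Z -/cC => hz hz';
  rewrite hz in e1z; rewrite hz' in ez1.
- apply: (core_alg mulC Hz h1 _ _ ezz).
  + case: e1z => e; [by left | right; exact: (mulIg Z)].
  + case: ez1 => e; [left; exact: (mulIg Z^-1) | by right].
- apply: (core_alg mulC Hz h1 _ _ ezz).
  + case: ez1 => e; [by left | right; exact: (mulIg Z)].
  + case: e1z => e; [left; exact: (mulIg Z^-1) | by right].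
Qed.

Section S.
Context (M : finGroupType) (mulC : forall x y : M, x * y = y * x) (y0 : M)
  (Hy0 : y0 ^+ 2 != 1) (f : LM M -> LM M) (fH : isHalf f) (finj : injective f).

Definition sgn A := forall x, (f (A, x)).2 = (f (A, 1)).2 * phi f x.
Definition sgnm A := forall x, (f (A, x)).2 = (f (A, 1)).2 * (phi f x)^-1.

Lemma E_AB A B x y : A != K1 -> B != K1 ->
  (f (Kmul A B, x^-1 * y)).2 = ((f (A, x)).2)^-1 * (f (B, y)).2 \/
  (f (Kmul A B, x^-1 * y)).2 = ((f (B, y)).2)^-1 * (f (A, x)).2.
Proof.
move=> nA nB; have := fH (A, x) (B, y); rewrite Lmul_n //.
have := fnN mulC Hy0 x fH finj nA; have := fnN mulC Hy0 y fH finj nB.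
case: (f (A, x)) => P u; case: (f (B, y)) => Q v /= nQ nP.
by rewrite !Lmul_n //; case=> ->; [left|right].
Qed.

Lemma phM' x y : phi f (x * y) = phi f x * phi f y.
Proof. exact: (phiM mulC Hy0 x y fH finj). Qed.

Lemma sign_of A : A != K1 -> sgn A \/ sgnm A.
Proof.
move=> nA; apply: (sign_lemma mulC phM').
  move=> x y e; have e1 := fpi mulC Hy0 A x fH finj; have e2 := fpi mulC Hy0 A y fH finj.
  have : f (A, x) = f (A, y).
    by move: e1 e2 e; case: (f (A, x)); case: (f (A, y)) => /= ? ? ? ? -> -> ->.
  by move/finj => [].
by move=> x y; exact: (urel mulC Hy0 x y fH finj nA).
Qed.

Lemma exz : exists z, phi f z * phi f z != 1.
Proof.
have [g _ gK] := injF_bij (phi_inj mulC Hy0 fH finj).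
by exists (g y0); rewrite gK; move: Hy0; rewrite expgS expg1.
Qed.

Lemma signs_agree A B : A != K1 -> B != K1 -> A != B -> sgn A -> sgnm B -> False.
Proof.
move=> nA nB nAB hA hB.
have nC : Kmul A B != K1 by rewrite Kmul_eq1.
have [z Hz] := exz.
apply: (@cross_alg M mulC (phi f) phM' (fun t => (f (A, t)).2) (fun t => (f (B, t)).2)
  (fun t => (f (Kmul A B, t)).2) z Hz (fun x y => E_AB x y nA nB)) => //.
exact: sign_of.
Qed.

Definition Ka : Klein := (false, true).

Lemma all_signs : sgn Ka -> forall A, A != K1 -> sgn A.
Proof.
move=> ha A nA; case: (eqVneq A Ka) => [->//|nAa].
case: (sign_of nA) => // hm; exfalso.
apply: (signs_agree (A:=Ka) (B:=A) isT nA _ ha hm); by rewrite eq_sym.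
Qed.

Lemma all_signsm : sgnm Ka -> forall A, A != K1 -> sgnm A.
Proof.
move=> ha A nA; case: (eqVneq A Ka) => [->//|nAa].
case: (sign_of nA) => // hp; exfalso.
exact: (signs_agree (A:=A) (B:=Ka) nA isT nAa hp ha).
Qed.

Lemma fAE A x : A != K1 -> sgn A -> f (A, x) = ((f (A, 1)).1, (f (A, 1)).2 * phi f x).
Proof.
move=> nA hA; rewrite -hA -(fpi mulC Hy0 A x fH finj).
by case: (f (A, x)).
Qed.

Lemma pirel A B : B != K1 -> (f (Kmul A B, 1)).1 = Kmul (f (A, 1)).1 (f (B, 1)).1.
Proof.
move=> nB; have := fH (A, 1) (B, 1); rewrite Lmul_n // invg1 mul1g.
by case=> ->; rewrite /Lmul //= KmulC.
Qed.

Lemma crel A B : A != K1 -> B != K1 -> A != B -> sgn A -> sgn B -> sgn (Kmul A B) ->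
  (f (Kmul A B, 1)).2 = ((f (A, 1)).2)^-1 * (f (B, 1)).2.
Proof.
move=> nA nB nAB hA hB hC.
have [z Hz] := exz.
have e11 := E_AB 1 1 nA nB; have e1z := E_AB 1 z nA nB.
rewrite invg1 mul1g in e11; rewrite invg1 mul1g hC (hB z) in e1z.
case: e11 => // e11.
case: e1z => e1z.
  by apply: (mulIg (phi f z)); rewrite e1z mulgA.
exfalso; move: e1z; rewrite e11.
set cA := (f (A, 1)).2; set cB := (f (B, 1)).2; set Z := phi f z.
have -> : (cB * Z)^-1 * cA = cB^-1 * cA * Z^-1.
  by rewrite invMg [Z^-1 * _]mulC -!mulgA [Z^-1 * cA]mulC.
move=> /mulgI e.
by move: Hz; rewrite -/Z {2}e mulgV eqxx.
Qed.

Lemma aut_of_plus : sgn Ka -> isAut f.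
Proof.
move=> ha [A x] [B y]; have hs := all_signs ha.
have phV := homV phM'.
case: (eqVneq B K1) => [->|nB].
  rewrite Lmul_r1; case: (eqVneq A K1) => [->|nA].
    by rewrite !(fNE mulC Hy0 _ fH finj) Lmul_r1 phM'.
  by rewrite (fAE (x * y) nA (hs _ nA)) (fAE x nA (hs _ nA)) (fNE mulC Hy0 _ fH finj) Lmul_r1 phM' mulgA.
have fB := fnN mulC Hy0 1 fH finj nB.
rewrite Lmul_n //; case: (eqVneq A K1) => [->|nA].
  rewrite K1mul (fNE mulC Hy0 _ fH finj) (fAE _ nB (hs _ nB)) (fAE y nB (hs _ nB)) Lmul_l1 (negbTE fB).
  by rewrite phM' phV !mulgA [_ * (phi f x)^-1]mulC.
have fA := fnN mulC Hy0 1 fH finj nA.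
case: (eqVneq A B) => [<-|nAB].
  rewrite Kmulxx (fNE mulC Hy0 _ fH finj) (fAE x nA (hs _ nA)) (fAE y nA (hs _ nA)) Lmul_n // Kmulxx.
  by rewrite (rearr mulC) mulVg mul1g phM' phV.
have nC : Kmul A B != K1 by rewrite Kmul_eq1.
rewrite (fAE _ nC (hs _ nC)) (fAE x nA (hs _ nA)) (fAE y nB (hs _ nB)) Lmul_n // (pirel A nB) (crel nA nB nAB (hs _ nA) (hs _ nB) (hs _ nC)).
by rewrite (rearr mulC) phM' phV.
Qed.
End S.

Definition J0 (M : finGroupType) (X : LM M) : LM M :=
  if X.1 == K1 then X else (X.1, X.2^-1).

Lemma J0K (M : finGroupType) : involutive (@J0 M).
Proof. by case=> A x; case: (eqVneq A K1) => [->|nA]; rewrite /J0 /= ?eqxx ?(negbTE nA) /= ?(negbTE nA) ?invgK. Qed.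

Lemma J0_half (M : finGroupType) (mulC : forall x y : M, x * y = y * x) : isHalf (@J0 M).
Proof.
case=> A x [B y]; case: (eqVneq B K1) => [->|nB].
  rewrite Lmul_r1; case: (eqVneq A K1) => [->|nA].
    by left; rewrite /J0 /= Lmul_r1.
  right; rewrite /J0 /= ?(negbTE nA) ?eqxx /= Lmul_l1 ?(negbTE nA).
  by rewrite invMg.
rewrite Lmul_n //; case: (eqVneq A K1) => [->|nA].
  right; rewrite K1mul /J0 /= ?(negbTE nB) ?eqxx Lmul_r1.
  by rewrite invMg invgK.
case: (eqVneq A B) => [<-|nAB].
  right; rewrite Kmulxx /J0 /= ?eqxx ?(negbTE nA) Lmul_n // Kmulxx.
  by rewrite !invgK mulC.
have nC : Kmul A B != K1 by rewrite Kmul_eq1.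
left; rewrite /J0 /= ?(negbTE nC) ?(negbTE nA) ?(negbTE nB) Lmul_n //.
by rewrite invMg !invgK mulC.
Qed.

Lemma half_comp (M : finGroupType) (f g : LM M -> LM M) :
  isHalf f -> isHalf g -> isHalf (g \o f).
Proof.
move=> fH gH X Y /=; case: (fH X Y) => ->.
  by case: (gH (f X) (f Y)) => ->; [left|right].
by case: (gH (f Y) (f X)) => ->; [right|left].
Qed.

Lemma main_half (M : finGroupType) (mulC : forall x y : M, x * y = y * x) (y0 : M)
  (Hy0 : y0 ^+ 2 != 1) (f : LM M -> LM M) : isHalf f -> injective f ->
  isAut f \/ isAut (@J0 M \o f).
Proof.
move=> fH finj.
case: (sign_of mulC Hy0 fH finj (A:=Ka) isT) => h.
  by left; apply: (aut_of_plus mulC Hy0 fH finj).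
right.
have gH : isHalf (@J0 M \o f) by apply: half_comp => //; exact: J0_half.
have ginj : injective (@J0 M \o f) by apply: inj_comp => //; exact: can_inj (@J0K M).
apply: (aut_of_plus mulC Hy0 gH ginj) => x /=.
have e : forall t, (J0 (f (Ka, t))).2 = ((f (Ka, t)).2)^-1.
  move=> t; have := fnN mulC Hy0 t fH finj (A:=Ka) isT.
  by rewrite /J0; case: eqP.
have ep : phi (@J0 M \o f) x = phi f x.
  by rewrite /phi /= (fNE mulC Hy0 _ fH finj).
rewrite ep !e (h x) (h 1) (hom1 (phM' mulC Hy0 fH finj)) invg1 mulg1 invMg invgK mulC.
done.
Qed.

Lemma sgnm_aut (M : finGroupType) (mulC : forall x y : M, x * y = y * x) (y0 : M)
  (Hy0 : y0 ^+ 2 != 1) (f : LM M -> LM M) (fH : isHalf f) (finj : injective f) :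
  sgnm f Ka -> isAut (@J0 M \o f).
Proof.
move=> h.
have gH : isHalf (@J0 M \o f) by apply: half_comp => //; exact: J0_half.
have ginj : injective (@J0 M \o f) by apply: inj_comp => //; exact: can_inj (@J0K M).
apply: (aut_of_plus mulC Hy0 gH ginj) => x /=.
have e : forall t, (J0 (f (Ka, t))).2 = ((f (Ka, t)).2)^-1.
  move=> t; have := fnN mulC Hy0 t fH finj (A:=Ka) isT.
  by rewrite /J0; case: eqP.
have ep : phi (@J0 M \o f) x = phi f x.
  by rewrite /phi /= (fNE mulC Hy0 _ fH finj).
rewrite ep !e (h x) (h 1) (hom1 (phM' mulC Hy0 fH finj)) invg1 mulg1 invMg invgK mulC.
done.
Qed.

Lemma J0_not_aut (M : finGroupType) (y0 : M) (Hy0 : y0 ^+ 2 != 1) : ~ isAut (@J0 M).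
Proof.
move=> H; have := H (Ka, 1) (K1, y0).
rewrite Lmul_r1 mul1g /J0 /= Lmul_r1 ?invg1 ?mul1g => -[] e.
by move: Hy0; rewrite expgS expg1 -{1}e mulVg eqxx.
Qed.

Lemma aut_sgn (M : finGroupType) (mulC : forall x y : M, x * y = y * x) (y0 : M)
  (Hy0 : y0 ^+ 2 != 1) (g : LM M -> LM M) (gA : isAut g) (ginj : injective g) :
  sgn g Ka.
Proof.
have gH : isHalf g by move=> X Y; left; exact: gA.
case: (sign_of mulC Hy0 gH ginj (A:=Ka) isT) => // h; exfalso.
have jA := sgnm_aut mulC Hy0 gH ginj h.
have [hi gK hK] := injF_bij ginj.
apply: (J0_not_aut Hy0) => X Y.
rewrite -(hK X) -(hK Y) -gA.
by have := jA (hi X) (hi Y).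
Qed.

Lemma aut_cA (M : finGroupType) (mulC : forall x y : M, x * y = y * x) (y0 : M)
  (Hy0 : y0 ^+ 2 != 1) (g : LM M -> LM M) (gA : isAut g) (ginj : injective g) A :
  A != K1 -> ((g (A, 1)).2)^-1 = (g (A, 1)).2.
Proof.
move=> nA.
have gH : isHalf g by move=> X Y; left; exact: gA.
have hs := all_signs mulC Hy0 gH ginj (aut_sgn mulC Hy0 gA ginj).
have [B [nB [nAB nC]]] : exists B, [/\ B != K1, A != B & Kmul A B != K1].
  move: nA; case: A => [] [] [] // _;
    first [by exists (true, false) | by exists (false, true)].
have eB : Kmul A (Kmul A B) = B by case: (A) (B) => [] [] [] [] [] [].
have nAC : A != Kmul A B by move: nB nC; case: (A) (B) => [] [] [] [] [] [].
have e1 := crel mulC Hy0 gH ginj nA nB nAB (hs _ nA) (hs _ nB) (hs _ nC).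
have nAAB : Kmul A (Kmul A B) != K1 by rewrite eB.
have e2 := crel mulC Hy0 gH ginj nA nC nAC (hs _ nA) (hs _ nC) (hs _ nAAB).
rewrite eB e1 mulgA in e2.
have E := @mulIg _ (g (B, 1)).2 _ _ (etrans (mul1g _) e2).
by apply: (mulgI ((g (A, 1)).2)^-1); rewrite mulVg -E.
Qed.

Lemma aut_comm (M : finGroupType) (mulC : forall x y : M, x * y = y * x) (y0 : M)
  (Hy0 : y0 ^+ 2 != 1) (g : LM M -> LM M) (gA : isAut g) (ginj : injective g) X :
  J0 (g X) = g (J0 X).
Proof.
have gH : isHalf g by move=> X' Y; left; exact: gA.
have hs := all_signs mulC Hy0 gH ginj (aut_sgn mulC Hy0 gA ginj).
case: X => A x; case: (eqVneq A K1) => [->|nA].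
  by rewrite /J0 /= (fNE mulC Hy0 _ gH ginj) /=.
have fA := fnN mulC Hy0 1 gH ginj nA.
rewrite /J0 /= (negbTE nA) (fAE mulC Hy0 gH ginj x nA (hs _ nA)) /= (negbTE fA).
rewrite (fAE mulC Hy0 gH ginj x^-1 nA (hs _ nA)) (homV (phM' mulC Hy0 gH ginj)).
by rewrite invMg mulC (aut_cA mulC Hy0 gA ginj nA).
Qed.

Lemma inHalfP (M : finGroupType) (f : {perm LM M}) : reflect (isHalf f) (f \in Half M).
Proof.
rewrite inE; apply: (iffP forallP) => [H X Y | H X].
  by move: (H X) => /forallP/(_ Y)/orP[]/eqP; [left|right].
by apply/forallP => Y; case: (H X Y) => ->; rewrite eqxx ?orbT.
Qed.

Lemma inAutP (M : finGroupType) (f : {perm LM M}) : reflect (isAut f) (f \in Aut_L M).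
Proof.
rewrite inE; apply: (iffP forallP) => [H X Y | H X].
  by move: (H X) => /forallP/(_ Y)/eqP.
by apply/forallP => Y; rewrite H.
Qed.

Lemma z1z1 : (Zp1 : 'Z_2) * Zp1 = 1.
Proof. by apply/eqP. Qed.
Lemma z1n1 : (Zp1 : 'Z_2) != 1.
Proof. by []. Qed.

Section Fin.
Context (M : finGroupType) (mulC : forall x y : M, x * y = y * x) (y0 : M)
  (Hy0 : y0 ^+ 2 != 1).

Definition Jp : {perm LM M} := perm (can_inj (@J0K M)).
Lemma JpE X : Jp X = J0 X. Proof. by rewrite permE. Qed.

Lemma JpJp : Jp * Jp = 1.
Proof. by apply/permP => X; rewrite permM !JpE J0K perm1. Qed.

Lemma Jp_notAut : Jp \notin Aut_L M.
Proof.
apply/negP => /inAutP H; apply: (J0_not_aut Hy0) => X Y.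
by have := H X Y; rewrite !JpE.
Qed.

Lemma autM f g : f \in Aut_L M -> g \in Aut_L M -> f * g \in Aut_L M.
Proof.
move=> /inAutP fA /inAutP gA; apply/inAutP => X Y.
by rewrite !permM fA gA.
Qed.

Lemma autV f : f \in Aut_L M -> f^-1 \in Aut_L M.
Proof.
move=> /inAutP fA; apply/inAutP => X Y.
by apply: (@perm_inj _ f); rewrite fA !permKV.
Qed.

Lemma autHalf f : f \in Aut_L M -> f \in Half M.
Proof. by move=> /inAutP fA; apply/inHalfP => X Y; left. Qed.

Lemma halfJ f : f \in Half M -> f * Jp \in Half M.
Proof.
move=> /inHalfP fH; apply/inHalfP => X Y.
rewrite !permM !JpE; exact: (half_comp fH (J0_half mulC)).
Qed.

Lemma commJ f : f \in Aut_L M -> f * Jp = Jp * f.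
Proof.
move=> /inAutP fA; apply/permP => X.
by rewrite !permM !JpE (aut_comm mulC Hy0 fA (@perm_inj _ f)).
Qed.

Lemma half_dich f : f \in Half M -> (f \in Aut_L M) || (f * Jp \in Aut_L M).
Proof.
move=> /inHalfP fH; case: (main_half mulC Hy0 fH (@perm_inj _ f)) => H.
  by apply/orP; left; apply/inAutP.
apply/orP; right; apply/inAutP => X Y.
by rewrite !permM !JpE; exact: H.
Qed.

Definition Phi (f : {perm LM M}) : ('Z_2 * {perm LM M})%type :=
  if f \in Aut_L M then (1, f) else (Zp1, f * Jp).


Lemma commJ_half g : g \in Half M -> g * Jp = Jp * g.
Proof.
move=> gH; case/orP: (half_dich gH) => [/commJ //|hA].
have e := commJ hA.
have -> : Jp * g = Jp * (g * Jp) * Jp by rewrite -!mulgA JpJp mulg1.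
by rewrite -e -!mulgA JpJp mulg1.
Qed.

Lemma pairM (a c : 'Z_2) (b d : {perm LM M}) : (a, b) * (c, d) = (a * c, b * d).
Proof. by []. Qed.

Lemma Phi_morph f g : f \in Half M -> g \in Half M -> Phi (f * g) = Phi f * Phi g.
Proof.
move=> fH gH; rewrite /Phi.
case af: (f \in Aut_L M); case ag: (g \in Aut_L M).
- by rewrite autM // pairM mulg1.
- have -> : (f * g \in Aut_L M) = false.
    apply/negbTE/negP => fgA; move: ag; rewrite -[g](mulKg f).
    by rewrite autM // autV.
  by rewrite pairM mul1g mulgA.
- have -> : (f * g \in Aut_L M) = false.
    apply/negbTE/negP => fgA; move: af; rewrite -[f](mulgK g).
    by rewrite autM // autV.
  by rewrite pairM mulg1 -!mulgA (commJ_half gH).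
- have fA : f * Jp \in Aut_L M by case/orP: (half_dich fH) => //; rewrite af.
  have gA : g * Jp \in Aut_L M by case/orP: (half_dich gH) => //; rewrite ag.
  have e : f * g = f * Jp * (g * Jp).
    by rewrite (commJ_half gH) mulgA -(mulgA f) JpJp mulg1.
  by rewrite e autM // pairM z1z1.
Qed.

End Fin.

Unset Implicit Arguments.
Theorem corollary5p4 (M : finGroupType) :
  abelian [set: M] -> 2 < exponent [set: M] ->
  Half M \isog setX (Zp 2) (Aut_L M).
Proof.
move=> ab e2.
have mulC : forall x y : M, x * y = y * x.
  move=> x y; have := (centsP ab) x (in_setT x) y (in_setT y); rewrite /commute => -> //.
have [y0 Hy0] := exists_sq e2.
apply: (@misom_isog _ _ _ _ (@Phi M)); apply/andP; split.
  by apply/morphicP => f g fH gH; apply: (Phi_morph mulC Hy0).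
apply/eqP/setP => -[i h]; apply/imsetP/idP.
- case=> f /setD1P [nf fH] ->; rewrite /Phi.
  case af: (f \in Aut_L M); rewrite in_setD1 in_setX /=.
    rewrite group1 af /= andbT; apply/negP => /eqP [] e.
    by rewrite e eqxx in nf.
  have fA : f * Jp M \in Aut_L M.
    by case/orP: (half_dich mulC Hy0 fH) => //; rewrite af.
  by rewrite fA andbT /Zp /= inE.
- rewrite in_setD1 in_setX /= => /and3P [ni _ hA].
  have ZpE : forall j : 'Z_2, j = 1 \/ j = Zp1.
    by case=> -[|[|//]] Hj; [left|right]; apply: val_inj.
  case: (ZpE i) => ei; subst i.
    exists h; last by rewrite /Phi hA.
    rewrite in_setD1 autHalf // andbT; apply/negP => /eqP e.
    by rewrite e eqxx in ni.
  have nf : h * Jp M \notin Aut_L M.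
    apply/negP => fA; apply: (negP (Jp_notAut Hy0)).
    by rewrite -[Jp M](mulKg h) autM // autV.
  exists (h * Jp M).
    rewrite in_setD1 halfJ ?autHalf // andbT.
    apply/negP => /eqP e; rewrite e in nf.
    by case/negP: nf; apply/inAutP => X Y; rewrite !perm1.
  by rewrite /Phi (negbTE nf) -mulgA JpJp mulg1.
Qed.
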